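(* Let $(K,D,v)$ be a VD-field such that $(K,v)$ is spherically complete, and assume that the map $D$ induced on the residue field $Kv$ is surjective. Then $D$ is surjective on $K$.
   Context: A VD-field is a valued field $(K,v)$ (valuation ring $\mathcal{O}$, residue field $Kv$, value group $vK$) with an additive map $D:K\to K$ such that: $vDa\ge va$ for all $a\in K$; $vK=\{va\mid a\in K,\ vDa>va\}$; there is $e\in\mathcal{O}$ with $D(ab)=aDb+bDa+e(Da)(Db)$ for all $a,b\in K$. The induced map on $Kv$ is $D(av)=(Da)v$ for $a\in\mathcal{O}$. $(K,v)$ is spherically complete if in the ultrametric space $u(a,b)=v(a-b)$ every nest (family totally ordered by inclusion) of balls has non-empty intersection. *)

(* Defs.v *)
From mathcomp Require Import all_boot all_algebra.
Set Implicit Arguments. Unset Strict Implicit. Unset Printing Implicit Defensive.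
Import GRing.Theory.
Local Open Scope ring_scope.

Definition ordered_abelian_group (G : zmodType) (le : rel G) : Prop :=
  [/\ reflexive le, transitive le, antisymmetric le, total le
    & forall a b c : G, le a b -> le (a + c) (b + c)].

(* Values live in Gamma ∪ {oo}, encoded as option Gamma with None = oo. *)
Definition vle (G : zmodType) (le : rel G) (x y : option G) : bool :=
  match x, y with
  | _, None => true
  | None, Some _ => false
  | Some x', Some y' => le x' y'
  end.

Definition vlt (G : zmodType) (le : rel G) (x y : option G) : bool :=
  vle le x y && ~~ vle le y x.

Definition vadd (G : zmodType) (x y : option G) : option G :=
  match x, y with
  | Some x', Some y' => Some (x' + y')
  | _, _ => None
  end.

Definition valuation (K : fieldType) (G : zmodType) (le : rel G)
    (v : K -> option G) : Prop :=
  [/\ ordered_abelian_group le,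
      forall a : K, v a = None <-> a = 0,
      forall a b : K, v (a * b) = vadd (v a) (v b),
      forall a b : K, vle le (v a) (v (a + b)) || vle le (v b) (v (a + b))
    & forall g : G, exists a : K, v a = Some g].

Definition in_O (K : fieldType) (G : zmodType) (le : rel G)
    (v : K -> option G) (a : K) : Prop := vle le (Some 0) (v a).

Definition VD_field (K : fieldType) (G : zmodType) (le : rel G)
    (v : K -> option G) (D : K -> K) : Prop :=
  [/\ valuation le v,
      forall a b : K, D (a + b) = D a + D b,
      forall a : K, vle le (v a) (v (D a)),
      forall g : G, exists a : K, v a = Some g /\ vlt le (v a) (v (D a))
    & exists e : K, in_O le v e /\
        forall a b : K, D (a * b) = a * D b + b * D a + e * D a * D b].

(* The induced map on the residue field Kv = O/m is surjective:
   for every residue class av (a in O) there is b in O with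
   D(bv) = (Db)v = av, i.e. v(Db - a) > 0. *)
Definition residue_D_surjective (K : fieldType) (G : zmodType) (le : rel G)
    (v : K -> option G) (D : K -> K) : Prop :=
  forall a : K, in_O le v a ->
    exists b : K, in_O le v b /\ vlt le (Some 0) (v (D b - a)).

Definition is_ball (K : fieldType) (G : zmodType) (le : rel G)
    (v : K -> option G) (B : K -> Prop) : Prop :=
  exists (a : K) (g : G), forall x : K, B x <-> vle le (Some g) (v (x - a)).

Definition spherically_complete (K : fieldType) (G : zmodType) (le : rel G)
    (v : K -> option G) : Prop :=
  forall F : (K -> Prop) -> Prop,
    (forall B, F B -> is_ball le v B) ->
    (forall B1 B2, F B1 -> F B2 ->
       (forall x, B1 x -> B2 x) \/ (forall x, B2 x -> B1 x)) ->
    exists x : K, forall B, F B -> B x.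

(* Main.v *)
Require Import Defs.
From mathcomp Require Import all_boot all_algebra.
From mathcomp Require Import boolp classical_sets.
From mathcomp Require Import ring.
Set Implicit Arguments. Unset Strict Implicit. Unset Printing Implicit Defensive.
Import GRing.Theory.
Local Open Scope ring_scope.

Lemma vle_refl (G : zmodType) (le : rel G) (H : ordered_abelian_group le) (x : option G) :
  vle le x x.
Proof. case: H => r _ _ _ _; case: x => //= ?; exact: r. Qed.

Lemma vle_trans (G : zmodType) (le : rel G) (H : ordered_abelian_group le) (x y z : option G) :
  vle le x y -> vle le y z -> vle le x z.
Proof.
case: H => _ t _ _ _; case: x => [a|]; case: y => [b|]; case: z => [c|] //=.
move=> h1 h2; exact: (t b a c).
Qed.

Lemma vle_total (G : zmodType) (le : rel G) (H : ordered_abelian_group le) (x y : option G) :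
  vle le x y || vle le y x.
Proof.
case: H => _ _ _ tt _; case: x => [a|]; case: y => [b|] //=.
Qed.

Lemma vltE (G : zmodType) (le : rel G) (H : ordered_abelian_group le) (x y : option G) :
  vlt le x y = ~~ vle le y x.
Proof.
rewrite /vlt; case h: (vle le y x); first by rewrite andbF.
by have := vle_total H x y; rewrite h orbF => ->.
Qed.

Lemma vlt_le_trans (G : zmodType) (le : rel G) (H : ordered_abelian_group le) (x y z : option G) :
  vlt le x y -> vle le y z -> vlt le x z.
Proof.
rewrite !(vltE H) => /negP h1 h2; apply/negP => h3; apply: h1.
exact: (vle_trans H h2 h3).
Qed.

Lemma ultra (K : fieldType) (G : zmodType) (le : rel G) (v : K -> option G)
  (Hv : valuation le v) o a b :
  vle le o (v a) -> vle le o (v b) -> vle le o (v (a + b)).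
Proof.
case: Hv => H _ _ U _; case/orP: (U a b) => h ha hb.
- exact: (vle_trans H ha h).
- exact: (vle_trans H hb h).
Qed.

Lemma ultra_lt (K : fieldType) (G : zmodType) (le : rel G) (v : K -> option G)
  (Hv : valuation le v) o a b :
  vlt le o (v a) -> vlt le o (v b) -> vlt le o (v (a + b)).
Proof.
case: (Hv) => H _ _ U _; case/orP: (U a b) => h ha hb.
- exact: (vlt_le_trans H ha h).
- exact: (vlt_le_trans H hb h).
Qed.

Lemma v0 (K : fieldType) (G : zmodType) (le : rel G) (v : K -> option G)
  (Hv : valuation le v) : v 0 = None.
Proof. by case: Hv => _ h _ _ _; apply/h. Qed.

Lemma vN (K : fieldType) (G : zmodType) (le : rel G) (v : K -> option G)
  (Hv : valuation le v) a : v (- a) = v a.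
Proof.
case: (Hv) => [[r t an tt inv] hz hm _ _].
have v1 : v 1 = Some 0.
  case E: (v 1) => [g|]; last by move/hz: E => /eqP; rewrite oner_eq0.
  have := hm 1 1; rewrite mulr1 E /= => -[Eg].
  have : g = g + g - g by rewrite addrK.
  by rewrite -Eg subrr => ->.
have vm1 : v (-1) = Some 0.
  case E: (v (-1)) => [h|]; last by move/hz: E => /eqP; rewrite oppr_eq0 oner_eq0.
  have := hm (-1) (-1); rewrite mulrNN mulr1 v1 E /= => -[Eh].
  case/orP: (tt h 0) => hh.
  - have := inv _ _ h hh; rewrite -Eh add0r => h2.
    by congr Some; apply: an; rewrite hh h2.
  - have := inv _ _ h hh; rewrite -Eh add0r => h2.
    by congr Some; apply: an; rewrite hh h2.
rewrite -mulN1r hm vm1; case: (v a) => //= x; by rewrite add0r.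
Qed.

Lemma vadd_ge (G : zmodType) (le : rel G) (H : ordered_abelian_group le) (a b : option G) :
  vle le (Some 0) a -> vle le b (vadd a b).
Proof.
case: H => _ _ _ _ inv; case: a => [h|]; case: b => [k|] //=.
by move=> hh; have := inv _ _ k hh; rewrite add0r.
Qed.

Lemma vaddC (G : zmodType) (a b : option G) : vadd a b = vadd b a.
Proof. by case: a => [h|]; case: b => [k|] //=; rewrite addrC. Qed.

Lemma vadd_lt (G : zmodType) (le : rel G) (H : ordered_abelian_group le) (g : G) w :
  vlt le (Some 0) w -> vlt le (Some g) (vadd (Some g) w).
Proof.
rewrite !(vltE H); case: H => _ _ _ _ inv; case: w => [h|] //= hn.
apply/negP => hh; move/negP: hn; apply.
by have := inv _ _ (- g) hh; rewrite subrr (addrC g h) addrK.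
Qed.

Theorem theorem49 (K : fieldType) (G : zmodType) (le : rel G)
  (v : K -> option G) (D : K -> K) :
  VD_field le v D ->
  spherically_complete le v ->
  residue_D_surjective le v D ->
  forall b : K, exists a : K, D a = b.
Proof.
move=> [Hv Dadd Dge Dex [e [eO Leib]]] Hsc Hres b.
have H : ordered_abelian_group le by case: Hv.
have hz : forall a, v a = None <-> a = 0 by case: Hv.
have hm : forall a c, v (a * c) = vadd (v a) (v c) by case: Hv.
have D0 : D 0 = 0.
  by apply: (@addrI _ (D 0)); rewrite -Dadd !addr0.
have DN : forall x, D (- x) = - D x.
  by move=> x; apply/eqP; rewrite -addr_eq0 -Dadd addNr D0.
have DB : forall x y, D (x - y) = D x - D y by move=> x y; rewrite Dadd DN.
case: (pselect (exists a, D a = b)) => // Hno; exfalso.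
pose gam a := v (b - D a).
have gamN : forall a, gam a <> None.
  move=> a /hz /eqP; rewrite subr_eq0 => /eqP Ea; apply: Hno; exists a; by rewrite Ea.
pose R : rel K := fun a a' => vle le (gam a) (v (a' - a)).
have mono : forall a a', R a a' -> vle le (gam a) (gam a').
  move=> a a' hR; rewrite /gam.
  have -> : b - D a' = (b - D a) + - D (a' - a) by rewrite DB; ring.
  apply: (ultra Hv); first exact: vle_refl.
  by rewrite (vN Hv); apply: (vle_trans H hR); apply: Dge.
have Rtr : forall r s t, R r s -> R s t -> R r t.
  move=> r s t h1 h2; rewrite /R.
  have -> : t - r = (t - s) + (s - r) by ring.
  apply: (ultra Hv) => //; exact: (vle_trans H (mono _ _ h1) h2).
have [m Hm] : exists m, premaximal R m.
  apply: (ZL_preorder 0).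
  - by move=> t; rewrite /R subrr (v0 Hv) /=; case: (gam t).
  - exact: Rtr.
  move=> A tot.
  have [||z Hz] := Hsc (fun B => exists a, A a /\ B = (fun x => vle le (gam a) (v (x - a)))).
  - move=> B [a [_ ->]].
    case E: (gam a) => [g|]; last by have := gamN a; rewrite E.
    by exists a, g.
  - move=> B1 B2 [a1 [A1 ->]] [a2 [A2 ->]].
    case: (tot a1 a2 A1 A2) => h; [right|left] => x hx.
    + have -> : x - a1 = (x - a2) + (a2 - a1) by ring.
      apply: (ultra Hv) => //; exact: (vle_trans H (mono _ _ h) hx).
    + have -> : x - a2 = (x - a1) + (a1 - a2) by ring.
      apply: (ultra Hv) => //; exact: (vle_trans H (mono _ _ h) hx).
  exists z => s As; exact: (Hz _ (ex_intro _ s (conj As erefl))).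
pose c := b - D m.
case Eg: (gam m) => [g|]; last by have := gamN m; rewrite Eg.
have vc : v c = Some g by [].
have cn0 : c != 0 by apply/eqP => /hz; rewrite vc.
have [t [vt vDt]] := Dex g.
have tn0 : t != 0 by apply/eqP => /hz; rewrite vt.
pose q := c / t.
have ctq : c = q * t by rewrite /q divfK.
have qO : in_O le v q.
  case E: (v q) => [h|]; last first.
    by move/hz: E => /eqP; rewrite /q mulf_eq0 invr_eq0 (negbTE cn0) (negbTE tn0).
  have := hm q t; rewrite -ctq vc vt E /= => -[Eh].
  have : h = h + g - g by rewrite addrK.
  rewrite -Eh subrr => h0; rewrite /in_O E h0 /=; case: H => r _ _ _ _; exact: r.
have [y [yO hy]] := Hres q qO.
pose x := t * y.
have Rx : R m (m + x).
  rewrite /R (addrC m x) addrK Eg /x hm vt vaddC; exact: vadd_ge.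
have := mono _ _ (Hm _ Rx).
have -> : gam (m + x) = v (D x - c).
  by rewrite /gam -(vN Hv) Dadd /c; congr v; ring.
have vDy : vle le (Some 0) (v (D y)) by exact: (vle_trans H yO (Dge y)).
have hlt : vlt le (Some g) (v (D x - c)).
  have -> : D x - c = t * (D y - q) + (y * D t + e * D t * D y).
    by rewrite /x Leib ctq; ring.
  apply: (ultra_lt Hv).
    by rewrite hm vt; apply: vadd_lt.
  apply: (ultra_lt Hv).
    rewrite hm; apply: (vlt_le_trans H); first by rewrite -vt; exact: vDt.
    exact: vadd_ge.
  rewrite hm vaddC; apply: (vlt_le_trans H (y := v (e * D t))); last exact: vadd_ge.
  rewrite hm; apply: (vlt_le_trans H); first by rewrite -vt; exact: vDt.
  exact: vadd_ge.
rewrite Eg; rewrite (vltE H) in hlt; by move/negP: hlt.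
Qed.
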